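(* Let $(N,+,* )$ be a finite planar nearring with $D(N)\ne\{0\}$. Write $(N,+)=N_1\oplus\cdots\oplus N_k$ as the direct sum of its Sylow $p$-subgroups (for distinct primes). Then there is an index $i$ such that for every $j\ne i$ every element of $N_j$ is a zero multiplier (so only the summand $N_i$ carries a nontrivial multiplication).
   Context: A (right) nearring $(N,+,* )$ is a set with a group $(N,+)$, a semigroup $(N,* )$, and right distributivity $(a+b)*c=a*c+b*c$. $N$ is planar if the relation $a\cong b$ ($x*a=x*b$ for all $x$) has at least $3$ classes and for all $a,b,c$ with $a\not\cong b$ the equation $x*a=x*b+c$ has a unique solution. The additive group of a finite planar nearring is nilpotent. The zero multipliers are the $n\in N$ with $x*n=0$ for all $x\in N$. $D(N)=\{n: n*(a+b)=n*a+n*b\ \forall a,b\}$. *)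

(* Defs.v *)
(* The additive group (N,+) of a nearring need not be
   abelian, so we model it as a finGroupType T whose group law mulg (written
   multiplicatively, identity 1) plays the role of "+", and whose nearring
   multiplication is a separate binary operation [mul]. *)
From HB Require Import structures.
From mathcomp Require Import all_boot all_fingroup all_solvable.
Set Implicit Arguments. Unset Strict Implicit. Unset Printing Implicit Defensive.

Local Open Scope group_scope.

Definition is_nearring (T : finGroupType) (mul : T -> T -> T) : Prop :=
  (forall a b c : T, mul (mul a b) c = mul a (mul b c)) /\
  (forall a b c : T, mul (a * b) c = mul a c * mul b c).

Definition nr_equiv (T : finGroupType) (mul : T -> T -> T) (a b : T) : Prop :=
  forall x : T, mul x a = mul x b.

Definition is_planar (T : finGroupType) (mul : T -> T -> T) : Prop :=
  (exists a b c : T, ~ nr_equiv mul a b /\ ~ nr_equiv mul a c /\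
                     ~ nr_equiv mul b c) /\
  (forall a b c : T, ~ nr_equiv mul a b ->
     exists! x : T, mul x a = mul x b * c).

Definition zero_multiplier (T : finGroupType) (mul : T -> T -> T) (n : T) : Prop :=
  forall x : T, mul x n = 1.

Definition distributive_elt (T : finGroupType) (mul : T -> T -> T) (n : T) : Prop :=
  forall a b : T, mul n (a * b) = mul n a * mul n b.

(* Main.v *)
Require Import Defs.
From HB Require Import structures.
From mathcomp Require Import all_boot all_fingroup all_solvable.
From Stdlib Require Import Classical.

Local Open Scope group_scope.

Section S.
Variables (T : finGroupType) (mul : T -> T -> T).
Hypothesis hN : is_nearring mul.

Lemma mul1l c : mul 1 c = 1.
Proof.
case: hN => _ hR; have := hR 1 1 c; rewrite mulg1 => h.
by apply: (mulgI (mul 1 c)); rewrite mulg1 -h.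
Qed.

Lemma mulXl x s k : mul (x ^+ k) s = (mul x s) ^+ k.
Proof.
case: hN => _ hR; elim: k => [|k IH]; first by rewrite !expg0 mul1l.
by rewrite !expgS hR IH.
Qed.

Hypothesis hP : is_planar mul.

Lemma mul1r x : mul x 1 = 1.
Proof.
case: hP => [[a [b [c [hab _]]]] hu]; case: hN => hA _.
have [z [_ hz]] := hu a b 1 hab.
have hy : forall c, mul (mul x 1) c = mul x 1 by move=> c0; rewrite hA mul1l.
have e1 := hz (mul x 1); rewrite !hy mulg1 in e1.
have e2 := hz 1; rewrite !mul1l mulg1 in e2.
by rewrite -(e1 erefl) (e2 erefl).
Qed.

Lemma inj_nz s : ~ zero_multiplier mul s -> injective (fun x => mul x s).
Proof.
move=> hs x y /= hxy; case: hP => _ hu.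
have hne : ~ nr_equiv mul s 1 by move=> h; apply: hs => z; rewrite h mul1r.
have [z [_ hz]] := hu s 1 (mul x s) hne.
have e1 := hz x; rewrite mul1r mul1g in e1.
have e2 := hz y; rewrite mul1r mul1g in e2.
by rewrite -(e1 erefl) (e2 (esym hxy)).
Qed.

Lemma order_nz s n : ~ zero_multiplier mul s -> #[mul n s] = #[n].
Proof.
move=> hs; apply/eqP; rewrite eqn_dvd; apply/andP; split.
  by rewrite order_dvdn -mulXl expg_order mul1l.
rewrite order_dvdn; apply/eqP; apply: (@inj_nz s hs (n ^+ #[mul n s]) 1) => /=.
by rewrite mul1l mulXl; apply/eqP; rewrite -order_dvdn.
Qed.

End S.

Theorem mainTheorem7 (T : finGroupType) (mul : T -> T -> T)
  (hN : is_nearring mul) (hP : is_planar mul)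
  (hD : exists n : T, n != 1 /\ distributive_elt mul n) :
  exists p : nat, [/\ prime p, (p %| #|[set: T]|)%N &
    forall q : nat, prime q -> q != p ->
      forall S : {group T}, q.-Sylow([set: T]) S ->
        forall n : T, n \in S -> zero_multiplier mul n].
Proof.
case: hD => n [hn1 hnD].
have n1 : mul n 1 = 1.
  have := hnD 1 1; rewrite mulg1 => h.
  by apply: (mulgI (mul n 1)); rewrite mulg1 -h.
have nX : forall a k, mul n (a ^+ k) = (mul n a) ^+ k.
  move=> a; elim=> [|k IH]; first by rewrite !expg0.
  by rewrite !expgS hnD IH.
have [a ha] : exists a, ~ zero_multiplier mul a.
  case: (hP) => [[a [b [c [hab _]]]] _].
  case: (classic (zero_multiplier mul a)) => za; last by exists a.
  case: (classic (zero_multiplier mul b)) => zb; last by exists b.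
  by exfalso; apply: hab => x; rewrite za zb.
set m := #[n].
have m1 : 1 < m by rewrite /m ltn_neqAle order_gt0 andbT eq_sym order_eq1.
have hpr : prime m.
  set r := pdiv m; have rpr : prime r := pdiv_prime m1.
  have rd : (r %| m)%N := pdiv_dvd m.
  set k := m %/ r.
  have k0 : 0 < k by rewrite /k divn_gt0 ?prime_gt0 // dvdn_leq // ltnW.
  have em : m = (k * r)%N by rewrite /k divnK.
  have hk : #[mul n a ^+ k] = r.
    rewrite orderXdiv (@order_nz T mul hN hP a n ha) -/m; last by rewrite /k dvdn_div.
    by rewrite {1}em mulKn.
  have hk' : ~ zero_multiplier mul (a ^+ k).
    move=> z; move: hk; rewrite -nX z order1 => r1.
    by move: (prime_gt1 rpr); rewrite -r1.
  have := @order_nz T mul hN hP _ n hk'; rewrite nX hk -/m => <-; done.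
exists m; split => //.
  by apply: order_dvdG; rewrite inE.
move=> q qpr qm S hS s hs.
case: (classic (zero_multiplier mul s)) => // hz; exfalso.
have e := @order_nz T mul hN hP _ n hz; rewrite -/m in e.
have dv : (m %| #[s])%N.
  by rewrite -e order_dvdn -nX expg_order n1.
have qe : q.-elt s := mem_p_elt (pHall_pgroup hS) hs.
have := pnat_dvd dv qe; rewrite pnatE //.
by move=> h; move: qm; rewrite eq_sym; move: h; rewrite !inE => ->.
Qed.
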